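(* Let $q=2^m$ with $m\ge 2$, and let $k$ be an integer with $1\le k\le q+1$ such that $\mathcal C_{\{3,5\}}^\perp|_{\mathrm{GF}(q)}$ contains a codeword of weight $k$. Then $\mathcal B_k(\mathcal C_{\{3,5\}}^\perp|_{\mathrm{GF}(q)})$ is invariant under the action of $\mathrm{Stab}_{U_{q+1}}$. In particular, if $k>3$, the incidence structure $(U_{q+1},\mathcal B_k(\mathcal C_{\{3,5\}}^\perp|_{\mathrm{GF}(q)}))$ is a $3$-design.
   Context: $U_{q+1}$ is the set of $(q+1)$-th roots of unity in $\mathrm{GF}(q^2)$, viewed as a subset of $\mathrm{PG}(1,q^2)=\mathrm{GF}(q^2)\cup\{\infty\}$; coordinates are indexed by $U_{q+1}$. $\mathrm{Stab}_{U_{q+1}}$ is the setwise stabilizer of $U_{q+1}$ in $\mathrm{PGL}_2(\mathrm{GF}(q^2))$ acting by linear fractional transformations. $\mathcal C_{\{3,5\}}=\{(a_3u^3+a_{q-2}u^{q-2}+a_5u^5+a_{q-4}u^{q-4})_{u\in U_{q+1}}: a_i\in\mathrm{GF}(q^2)\}$, $\mathcal C_{\{3,5\}}^\perp$ its dual under the standard inner product, and $\mathcal C^\perp_{\{3,5\}}|_{\mathrm{GF}(q)}=\mathcal C^\perp_{\{3,5\}}\cap\mathrm{GF}(q)^{q+1}$. $\mathcal B_k(\mathcal C)$ is the set of supports of codewords of Hamming weight $k$; invariance means $\pi(B)\in\mathcal B_k$ for all blocks $B$ and all $\pi\in \mathrm{Stab}_{U_{q+1}}$. A $3$-design: every $3$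 points lie in the same positive number of blocks. *)

(* Defs.v *)
From HB Require Import structures.
From mathcomp Require Import all_boot all_algebra all_field.
Set Implicit Arguments. Unset Strict Implicit. Unset Printing Implicit Defensive.
Import GRing.Theory.
Local Open Scope ring_scope.

(* F plays the role of GF(q^2); q is given explicitly. *)

Definition Uq (F : finFieldType) (q : nat) := {x : F | x ^+ q.+1 == 1}.

Definition inC35 (F : finFieldType) (q : nat) (c : {ffun Uq F q -> F}) : bool :=
  [exists a : (F * F) * (F * F),
     [forall u : Uq F q,
        c u == a.1.1 * (val u) ^+ 3 + a.1.2 * (val u) ^+ (q - 2)%N
               + a.2.1 * (val u) ^+ 5 + a.2.2 * (val u) ^+ (q - 4)%N]].

Definition inC35dual (F : finFieldType) (q : nat) (v : {ffun Uq F q -> F}) : bool :=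
  [forall w : {ffun Uq F q -> F}, inC35 w ==> (\sum_u w u * v u == 0)].

(* Subfield subcode: codewords of the dual with all coordinates in GF(q) = {x | x^q = x}. *)
Definition inC35dual_GFq (F : finFieldType) (q : nat) (v : {ffun Uq F q -> F}) : bool :=
  inC35dual v && [forall u, v u ^+ q == v u].

Definition supp (F : finFieldType) (q : nat) (v : {ffun Uq F q -> F}) : {set Uq F q} :=
  [set u | v u != 0].

Definition wt (F : finFieldType) (q : nat) (v : {ffun Uq F q -> F}) : nat := #|supp v|.

Definition Bk (F : finFieldType) (q k : nat) : {set {set Uq F q}} :=
  [set S | [exists v : {ffun Uq F q -> F}, [&& inC35dual_GFq v, wt v == k & supp v == S]]].

(* PG(1, F) = F u {oo}, with None = oo; linear fractional transformation of (a b; c d). *)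
Definition lft (F : finFieldType) (a b c d : F) (z : option F) : option F :=
  match z with
  | Some x => if c * x + d == 0 then None else Some ((a * x + b) / (c * x + d))
  | None => if c == 0 then None else Some (a / c)
  end.

(* (a b; c d) represents an element of PGL_2(F) stabilizing U_{q+1} setwise. *)
Definition inStab (F : finFieldType) (q : nat) (a b c d : F) : bool :=
  (a * d - b * c != 0) &&
  ([set lft a b c d (Some (val u)) | u : Uq F q] == [set Some (val u) | u : Uq F q]).

Definition imB (F : finFieldType) (q : nat) (a b c d : F) (B : {set Uq F q}) : {set Uq F q} :=
  [set u' : Uq F q | Some (val u') \in [set lft a b c d (Some (val u)) | u in B]].

Definition is_t_design (T : finType) (t : nat) (Bs : {set {set T}}) : Prop :=
  exists2 lam : nat, (0 < lam)%N &
    forall P : {set T}, #|P| = t -> #|[set B in Bs | P \subset B]| = lam.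

(* Main.v *)
Require Import Defs.
From HB Require Import structures.
From mathcomp Require Import all_boot all_algebra all_field.
From mathcomp Require Import ring zify.
Set Implicit Arguments. Unset Strict Implicit. Unset Printing Implicit Defensive.
Import GRing.Theory.
Local Open Scope ring_scope.

Ltac fld := field; do ?[apply/andP; split]; try done.

Section S.
Variables (F : finFieldType) (m : nat).
Hypothesis hm : (2 <= m)%N.
Hypothesis hF : #|F| = ((2 ^ m) ^ 2)%N.
Local Notation q := (2 ^ m)%N.

Lemma q_ge4 : (4 <= q)%N.
Proof. by rewrite (leq_trans _ (leq_pexp2l _ hm)). Qed.

Lemma char2 : (2 \in [pchar F])%N.
Proof. by apply: (@card_finPcharP _ 2 (m * 2)); rewrite // hF expnM. Qed.

Lemma two0 : (2%:R : F) = 0.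
Proof. exact: (pcharf0 char2). Qed.

Lemma frobD n (x y : F) : (x + y) ^+ (2 ^ n) = x ^+ (2 ^ n) + y ^+ (2 ^ n).
Proof.
apply: exprDn_pchar; rewrite (eq_pnat _ (pcharf_eq char2)).
by rewrite pnatX.
Qed.

Lemma oppE (x : F) : - x = x.
Proof. by apply/eqP; rewrite -subr_eq0 -opprD oppr_eq0 -mulr2n -mulr_natr two0 mulr0. Qed.

Lemma fqq (x : F) : (x ^+ q) ^+ q = x.
Proof. by rewrite -exprM mulnn -hF expf_card. Qed.


Lemma expU_neq0 (x : F) : x ^+ q.+1 = 1 -> x != 0.
Proof. by move=> h; apply/eqP => x0; move: h; rewrite x0 expr0n /= => /eqP; rewrite eq_sym oner_eq0. Qed.

Lemma expU_sub (x : F) j : x ^+ q.+1 = 1 -> (j <= q)%N -> x ^+ (q - j) = x^-1 ^+ j.+1.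
Proof.
move=> h hj; have x0 := expU_neq0 h.
rewrite exprVn; apply: (mulIf (expf_neq0 j.+1 x0)); rewrite mulVf ?expf_neq0 //.
by rewrite -exprD addnS subnK.
Qed.

Lemma expU_q (x : F) : x ^+ q.+1 = 1 -> x ^+ q = x^-1.
Proof. by move=> h; rewrite -(subn0 q) expU_sub. Qed.

Lemma unit_pow (y : F) : y != 0 -> (y ^+ (q - 1)) ^+ q.+1 = 1.
Proof.
move=> y0; rewrite -exprM.
have e : ((q - 1) * q.+1 = (q * q).-1)%N.
  have q1 : (1 <= q)%N by rewrite expn_gt0.
  move: q1; generalize q => Q hQ; nia.
rewrite e; apply: (mulIf y0); rewrite mul1r -exprSr prednK ?muln_gt0 ?expn_gt0 //.
by rewrite mulnn -hF expf_card.
Qed.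

Lemma quad0 (e2 e1 e0 : F) :
  (forall x : F, x ^+ q.+1 = 1 -> e2 * x ^+ 2 + e1 * x + e0 = 0) ->
  [/\ e2 = 0, e1 = 0 & e0 = 0].
Proof.
move=> H.
pose p : {poly F} := e2 *: 'X^((q - 1) * 2) + e1 *: 'X^(q - 1) + e0%:P.
have q4 := q_ge4.
have hp : p = 0.
  apply: (@roots_geq_poly_eq0 _ p (enum (predC1 0))).
  - apply/allP => y; rewrite mem_enum /= => hy.
    rewrite /root /p !hornerE -(H _ (unit_pow hy)) exprM //.
  - exact: enum_uniq.
  - rewrite -cardE cardC1 hF.
    apply: (leq_trans (size_polyD _ _)); rewrite geq_max; apply/andP; split.
      apply: (leq_trans (size_polyD _ _)); rewrite geq_max; apply/andP; split.
        apply: (leq_trans (size_scale_leq _ _)); rewrite size_polyXn.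
        rewrite -mulnn; move: q4; generalize q => Q hQ; nia.
      apply: (leq_trans (size_scale_leq _ _)); rewrite size_polyXn.
      rewrite -mulnn; move: q4; generalize q => Q hQ; nia.
    apply: (leq_trans (size_polyC_leq1 _)).
    rewrite -mulnn; move: q4; generalize q => Q hQ; nia.
have c0 := congr1 (fun r : {poly F} => r`_0) hp.
have c1 := congr1 (fun r : {poly F} => r`_(q - 1)) hp.
have c2 := congr1 (fun r : {poly F} => r`_((q - 1) * 2)) hp.
move: c0 c1 c2; rewrite /p /= !coefD !coefZ !coefXn !coefC.
have n1 : (0 == (q - 1) * 2)%N = false by apply/eqP; lia.
have n2 : (0 == (q - 1))%N = false by apply/eqP; lia.
have n3 : (q - 1 == (q - 1) * 2)%N = false by apply/eqP; lia.
have n4 : ((q - 1) * 2 == q - 1)%N = false by apply/eqP; lia.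
have n5 : (q - 1 == 0)%N = false by apply/eqP; lia.
have n6 : ((q - 1) * 2 == 0)%N = false by apply/eqP; lia.
rewrite n1 n2 n3 n4 n5 n6 !eqxx /= !mulr0 !mulr1 !add0r !addr0 => -> ->.
by move=> ->.
Qed.



Section Dual.
Local Notation U := (Uq F q).
Definition Ssum (j : nat) (v : {ffun U -> F}) : F := \sum_u v u * val u ^+ j.

Lemma sumw (e : (F * F) * (F * F)) (v : {ffun U -> F}) :
  \sum_u (e.1.1 * val u ^+ 3 + e.1.2 * val u ^+ (q - 2) + e.2.1 * val u ^+ 5
          + e.2.2 * val u ^+ (q - 4)) * v u =
  e.1.1 * Ssum 3 v + e.1.2 * Ssum (q - 2) v + e.2.1 * Ssum 5 v + e.2.2 * Ssum (q - 4) v.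
Proof.
rewrite /Ssum !mulr_sumr -!big_split /=; apply: eq_bigr => u _; ring.
Qed.

Lemma inC35_w (e : (F * F) * (F * F)) :
  inC35 [ffun u : U => e.1.1 * val u ^+ 3 + e.1.2 * val u ^+ (q - 2) + e.2.1 * val u ^+ 5
          + e.2.2 * val u ^+ (q - 4)].
Proof. by apply/existsP; exists e; apply/forallP => u; rewrite ffunE. Qed.

Lemma dual_comb (v : {ffun U -> F}) e : inC35dual v ->
  e.1.1 * Ssum 3 v + e.1.2 * Ssum (q - 2) v + e.2.1 * Ssum 5 v + e.2.2 * Ssum (q - 4) v = 0.
Proof.
move=> /forallP h.
have /implyP/(_ (inC35_w e))/eqP := h [ffun u : U => e.1.1 * val u ^+ 3 + e.1.2 * val u ^+ (q - 2)
   + e.2.1 * val u ^+ 5 + e.2.2 * val u ^+ (q - 4)].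
by under eq_bigr do rewrite ffunE; rewrite sumw.
Qed.

Lemma dual_S (v : {ffun U -> F}) : inC35dual v ->
  [/\ Ssum 3 v = 0, Ssum (q - 2) v = 0, Ssum 5 v = 0 & Ssum (q - 4) v = 0].
Proof.
move=> h; split.
- by have := dual_comb ((1,0),(0,0)) h; rewrite /= !mul0r !addr0 mul1r.
- by have := dual_comb ((0,1),(0,0)) h; rewrite /= !mul0r !addr0 add0r mul1r.
- by have := dual_comb ((0,0),(1,0)) h; rewrite /= !mul0r !addr0 !add0r mul1r.
- by have := dual_comb ((0,0),(0,1)) h; rewrite /= !mul0r !add0r mul1r.
Qed.

Lemma S_dual (v : {ffun U -> F}) :
  Ssum 3 v = 0 -> Ssum (q - 2) v = 0 -> Ssum 5 v = 0 -> Ssum (q - 4) v = 0 -> inC35dual v.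
Proof.
move=> h1 h2 h3 h4; apply/forallP => w; apply/implyP => /existsP [e /forallP he].
rewrite (eq_bigr (fun u => (e.1.1 * val u ^+ 3 + e.1.2 * val u ^+ (q - 2) + e.2.1 * val u ^+ 5
          + e.2.2 * val u ^+ (q - 4)) * v u)); last by move=> u _; rewrite (eqP (he u)).
by rewrite sumw h1 h2 h3 h4 !mulr0 !addr0.
Qed.

Lemma S_lin (v : {ffun U -> F}) (f : U -> F) al be ga de :
  inC35dual v ->
  (forall u, f u = al * val u ^+ 5 + be * val u ^+ 3 + ga * (val u)^-1 ^+ 3 + de * (val u)^-1 ^+ 5) ->
  \sum_u v u * f u = 0.
Proof.
move=> /dual_S [h1 h2 h3 h4] hf.
have q4 := q_ge4.
have e2 (u : U) : val u ^+ (q - 2) = (val u)^-1 ^+ 3.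
  by rewrite (expU_sub (j := 2)) //; first exact/eqP/(valP u); lia.
have e4 (u : U) : val u ^+ (q - 4) = (val u)^-1 ^+ 5.
  by rewrite (expU_sub (j := 4)) //; first exact/eqP/(valP u); lia.
rewrite (eq_bigr (fun u => al * (v u * val u ^+ 5) + be * (v u * val u ^+ 3)
    + ga * (v u * val u ^+ (q - 2)) + de * (v u * val u ^+ (q - 4)))); last first.
  by move=> u _; rewrite hf e2 e4; ring.
rewrite !big_split /= -!mulr_sumr.
by move: h1 h2 h3 h4; rewrite /Ssum => -> -> -> ->; rewrite !mulr0 !addr0.
Qed.

End Dual.


Lemma frob8 (y z : F) : (y + z) ^+ 8 = y ^+ 8 + z ^+ 8.
Proof. exact: (frobD 3). Qed.
Lemma frob2 (y z : F) : (y + z) ^+ 2 = y ^+ 2 + z ^+ 2.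
Proof. exact: (frobD 1). Qed.

Lemma lin_q (a b x : F) : x ^+ q.+1 = 1 -> (a * x + b) ^+ q = a ^+ q * x^-1 + b ^+ q.
Proof. by move=> hx; rewrite frobD exprMn (expU_q hx). Qed.

Lemma exp_a (x X Y K A B C D : F) : x != 0 -> Y != 0 ->
  X ^+ 8 = A ^+ 8 * x ^+ 8 + B ^+ 8 -> Y ^+ 2 = C ^+ 2 * x ^+ 2 + D ^+ 2 ->
  (X * Y / x * K) ^+ 5 * (X / Y) ^+ 3 =
  K ^+ 5 * (A ^+ 8 * C ^+ 2) * x ^+ 5 + K ^+ 5 * (A ^+ 8 * D ^+ 2) * x ^+ 3
  + K ^+ 5 * (B ^+ 8 * C ^+ 2) * x^-1 ^+ 3 + K ^+ 5 * (B ^+ 8 * D ^+ 2) * x^-1 ^+ 5.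
Proof.
move=> x0 Y0 hX hY.
transitivity (K ^+ 5 * (X ^+ 8 * Y ^+ 2 / x ^+ 5)); first by fld.
by rewrite hX hY; fld.
Qed.

Lemma exp_c (x X Y K A B : F) : x != 0 -> Y != 0 -> X != 0 ->
  X ^+ 8 = A ^+ 8 * x ^+ 8 + B ^+ 8 -> X ^+ 2 = A ^+ 2 * x ^+ 2 + B ^+ 2 ->
  (X * Y / x * K) ^+ 5 * (X / Y) ^+ 5 =
  K ^+ 5 * (A ^+ 8 * A ^+ 2) * x ^+ 5 + K ^+ 5 * (A ^+ 8 * B ^+ 2) * x ^+ 3
  + K ^+ 5 * (B ^+ 8 * A ^+ 2) * x^-1 ^+ 3 + K ^+ 5 * (B ^+ 8 * B ^+ 2) * x^-1 ^+ 5.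
Proof.
move=> x0 Y0 X0 hX hY.
transitivity (K ^+ 5 * (X ^+ 8 * X ^+ 2 / x ^+ 5)); first by fld.
by rewrite hX hY; fld.
Qed.


Lemma exp_b (x X Y K A B C D : F) : x != 0 -> X != 0 ->
  Y ^+ 8 = C ^+ 8 * x ^+ 8 + D ^+ 8 -> X ^+ 2 = A ^+ 2 * x ^+ 2 + B ^+ 2 ->
  (X * Y / x * K) ^+ 5 * (Y / X) ^+ 3 =
  K ^+ 5 * (C ^+ 8 * A ^+ 2) * x ^+ 5 + K ^+ 5 * (C ^+ 8 * B ^+ 2) * x ^+ 3
  + K ^+ 5 * (D ^+ 8 * A ^+ 2) * x^-1 ^+ 3 + K ^+ 5 * (D ^+ 8 * B ^+ 2) * x^-1 ^+ 5.
Proof. by move=> *; rewrite [X * Y]mulrC; apply: exp_a. Qed.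

Lemma exp_d (x X Y K C D : F) : x != 0 -> Y != 0 -> X != 0 ->
  Y ^+ 8 = C ^+ 8 * x ^+ 8 + D ^+ 8 -> Y ^+ 2 = C ^+ 2 * x ^+ 2 + D ^+ 2 ->
  (X * Y / x * K) ^+ 5 * (Y / X) ^+ 5 =
  K ^+ 5 * (C ^+ 8 * C ^+ 2) * x ^+ 5 + K ^+ 5 * (C ^+ 8 * D ^+ 2) * x ^+ 3
  + K ^+ 5 * (D ^+ 8 * C ^+ 2) * x^-1 ^+ 3 + K ^+ 5 * (D ^+ 8 * D ^+ 2) * x^-1 ^+ 5.
Proof. by move=> *; rewrite [X * Y]mulrC; apply: exp_c. Qed.

Section Mob.
Variables a b c d : F.
Hypothesis hdet : a * d - b * c != 0.
Hypothesis hU : forall x : F, x ^+ q.+1 = 1 ->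
  c * x + d != 0 /\ ((a * x + b) / (c * x + d)) ^+ q.+1 = 1.

Lemma Y_neq0 x : x ^+ q.+1 = 1 -> c * x + d != 0.
Proof. by case/hU. Qed.

Lemma X_neq0 x : x ^+ q.+1 = 1 -> a * x + b != 0.
Proof.
move=> hx; have [Y0 h] := hU hx; have := expU_neq0 h.
by apply: contraNneq => ->; rewrite mul0r.
Qed.

Lemma normeq x : x ^+ q.+1 = 1 -> (a * x + b) ^+ q.+1 = (c * x + d) ^+ q.+1.
Proof.
move=> hx; have [Y0 h] := hU hx.
by rewrite -[a * x + b](divfK Y0) exprMn h mul1r.
Qed.

Lemma Dzero : d ^+ q * b - c ^+ q * a = 0.
Proof.
have [h2 h1 h0] : [/\ a * b ^+ q - c * d ^+ q = 0,
   a * a ^+ q + b * b ^+ q - c * c ^+ q - d * d ^+ q = 0 & a ^+ q * b - c ^+ q * d = 0].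
  apply: quad0 => x hx; have N := normeq hx; have x0 := expU_neq0 hx.
  move: N; rewrite !exprS (lin_q a b hx) (lin_q c d hx).
  set A := a ^+ q; set B := b ^+ q; set C := c ^+ q; set D := d ^+ q => N.
  have E : x * ((a * x + b) * (A * x^-1 + B) - (c * x + d) * (C * x^-1 + D)) = 0.
    by rewrite N subrr mulr0.
  rewrite -E; fld.
have : (d ^+ q * b - c ^+ q * a) * (a * d - b * c) = 0.
  transitivity (- (a * b) * (a * a ^+ q + b * b ^+ q - c * c ^+ q - d * d ^+ q)
     + a ^+ 2 * (a ^+ q * b - c ^+ q * d) + b ^+ 2 * (a * b ^+ q - c * d ^+ q)).
    set A := a ^+ q; set B := b ^+ q; set C := c ^+ q; set D := d ^+ q; ring.
  by rewrite h2 h1 h0 !mulr0 !addr0.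
by move/eqP; rewrite mulf_eq0 (negbTE hdet) orbF => /eqP.
Qed.

Lemma kappa x x1 : (c ^+ q + d ^+ q * x) * (a * x1 + b) = (c ^+ q + d ^+ q * x1) * (a * x + b).
Proof.
apply/eqP; rewrite -subr_eq0.
have -> : (c ^+ q + d ^+ q * x) * (a * x1 + b) - (c ^+ q + d ^+ q * x1) * (a * x + b)
   = (d ^+ q * b - c ^+ q * a) * (x - x1).
  set C := c ^+ q; set D := d ^+ q; ring.
by rewrite Dzero mul0r.
Qed.

Definition rr x := (a * x + b) * (c * x + d) / x.

Lemma rr_neq0 x : x ^+ q.+1 = 1 -> rr x != 0.
Proof.
move=> hx; rewrite /rr; apply: mulf_neq0; last by rewrite invr_eq0 expU_neq0.
by apply: mulf_neq0; [apply: X_neq0 | apply: Y_neq0].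
Qed.

Lemma rq x : x ^+ q.+1 = 1 ->
  (rr x) ^+ q * (a * x + b) ^+ 2 = (c ^+ q + d ^+ q * x) ^+ 2 * rr x.
Proof.
move=> hx; have x0 := expU_neq0 hx; have N := normeq hx.
have hY := lin_q c d hx.
rewrite /rr expr_div_n exprMn (expU_q hx) invrK.
move: N hY; rewrite !exprS.
set X := a * x + b; set Y := c * x + d; set Xq := X ^+ q; set Yq := Y ^+ q.
move=> N hY.
have -> : c ^+ q + d ^+ q * x = Yq * x by rewrite hY; fld.
transitivity ((X * Xq) * (Yq * x * X)).
  by ring.
rewrite N; fld.
Qed.

Lemma s_gfq x : x ^+ q.+1 = 1 -> (rr x / rr 1) ^+ q = rr x / rr 1.
Proof.
move=> hx; have h1 : (1 : F) ^+ q.+1 = 1 by rewrite expr1n.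
have e := rq hx; have e1 := rq h1; have k := kappa x 1.
have X0 := X_neq0 hx; have X10 := X_neq0 h1.
have r0 := rr_neq0 hx; have r10 := rr_neq0 h1.
rewrite expr_div_n; move: e e1 k X0 X10 r0 r10.
set X := a * x + b; set X1 := a * 1 + b; set T := c ^+ q + d ^+ q * x;
set T1 := c ^+ q + d ^+ q * 1; set R := rr x; set R1 := rr 1; set Rq := R ^+ q; set R1q := R1 ^+ q.
move=> e e1 k X0 X10 r0 r10.
have R1q0 : R1q != 0 by rewrite /R1q expf_neq0.
clearbody X X1 T T1 R R1 Rq R1q.
have T10 : T1 != 0.
  apply/eqP => T10; move: e1; rewrite T10 expr0n mul0r => /eqP.
  by rewrite mulf_eq0 expf_eq0 (negbTE X10) andbF orbF (negbTE R1q0).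
have -> : Rq = T ^+ 2 * R / X ^+ 2 by rewrite -e; fld.
have -> : R1q = T1 ^+ 2 * R1 / X1 ^+ 2 by rewrite -e1; fld.
have -> : T = T1 * X / X1 by rewrite -k; fld.
fld.
Qed.


Local Notation U := (Uq F q).

Lemma sgU (u : U) : ((a * val u + b) / (c * val u + d)) ^+ q.+1 == 1.
Proof. by apply/eqP; case: (hU (eqP (valP u))). Qed.

Definition sg (u : U) : U := exist (fun x : F => x ^+ q.+1 == 1) _ (sgU u).

Lemma valU (u : U) : val u ^+ q.+1 = 1.
Proof. exact/eqP/(valP u). Qed.

Lemma sg_inj : injective sg.
Proof.
move=> u u' /(congr1 val) /= h; apply: val_inj.
have Y0 := Y_neq0 (valU u); have Y0' := Y_neq0 (valU u').
move: h Y0 Y0'; set x := val u; set x' := val u'.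
set X := a * x + b; set Y := c * x + d; set X' := a * x' + b; set Y' := c * x' + d.
move=> h Y0 Y0'.
have e : X * Y' = X' * Y.
  transitivity (X / Y * (Y * Y')); first by fld.
  by rewrite h; fld.
have : (a * d - b * c) * (x - x') = 0.
  transitivity (X * Y' - X' * Y); first by rewrite /X /Y /X' /Y'; ring.
  by rewrite e subrr.
by move/eqP; rewrite mulf_eq0 (negbTE hdet) /= subr_eq0 => /eqP.
Qed.

Definition sc (u : U) := (rr (val u) / rr 1) ^+ 5.

Lemma sc_neq0 u : sc u != 0.
Proof.
have h1 : (1 : F) ^+ q.+1 = 1 by rewrite expr1n.
by rewrite /sc expf_neq0 // mulf_neq0 ?invr_eq0 ?rr_neq0 ?valU.
Qed.

Lemma good k B : B \in Bk F q k -> [set sg u | u in B] \in Bk F q k.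
Proof.
rewrite !inE => /existsP [v /and3P [hv /eqP hw /eqP hs]].
apply/existsP.
pose g := invF sg_inj.
pose v' := [ffun u' => v (g u') * sc (g u')].
exists v'.
have hv' u : v' (sg u) = v u * sc u by rewrite ffunE /g invF_f.
have hsupp : supp v' = [set sg u | u in B].
  apply/setP => u'; have -> : u' = sg (g u') by rewrite /g f_invF.
  rewrite inE hv' mulf_eq0 negb_or sc_neq0 andbT.
  by rewrite mem_imset; [rewrite -hs inE | exact: sg_inj].
have [hd hq] := andP hv.
apply/and3P; split; last by rewrite hsupp.
  2: by rewrite /wt hsupp card_imset; [rewrite -hs; apply/eqP | exact: sg_inj].
apply/andP; split; last first.
  apply/forallP => u'; have -> : u' = sg (g u') by rewrite /g f_invF.
  rewrite hv' exprMn (eqP (forallP hq _)) /sc -exprM mulnC exprM s_gfq //; exact: valU.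
have Sre j : Ssum j v' = \sum_u v u * (sc u * val (sg u) ^+ j).
  rewrite /Ssum (reindex_inj sg_inj) /=; apply: eq_bigr => u _.
  by rewrite hv' -mulrA.
have q4 := q_ge4.
apply: S_dual; rewrite Sre.
- eapply S_lin; first exact: hd.
  move=> u /=; have hx := valU u.
  apply: exp_a; [exact: expU_neq0 | exact: Y_neq0 | by rewrite frob8 exprMn | by rewrite frob2 exprMn].
- eapply S_lin; first exact: hd.
  move=> u /=; have hx := valU u.
  have hs1 : ((a * val u + b) / (c * val u + d)) ^+ q.+1 = 1 by case: (hU hx).
  rewrite (expU_sub (j := 2)) ?invf_div; [ | exact: hs1 | lia].
  apply: exp_b; [exact: expU_neq0 | exact: X_neq0 | by rewrite frob8 exprMn | by rewrite frob2 exprMn].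
- eapply S_lin; first exact: hd.
  move=> u /=; have hx := valU u.
  apply: exp_c; [exact: expU_neq0 | exact: Y_neq0 | exact: X_neq0 | by rewrite frob8 exprMn | by rewrite frob2 exprMn].
- eapply S_lin; first exact: hd.
  move=> u /=; have hx := valU u.
  have hs1 : ((a * val u + b) / (c * val u + d)) ^+ q.+1 = 1 by case: (hU hx).
  rewrite (expU_sub (j := 4)) ?invf_div; [ | exact: hs1 | lia].
  apply: exp_d; [exact: expU_neq0 | exact: Y_neq0 | exact: X_neq0 | by rewrite frob8 exprMn | by rewrite frob2 exprMn].
Qed.


Definition lam k (P : {set U}) := #|[set B in Bk F q k | P \subset B]|.

Lemma lam_inv k P : lam k P = lam k [set sg u | u in P].
Proof.
pose Phi := fun B : {set U} => [set sg u | u in B].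
have Phi_inj : injective Phi := imset_inj sg_inj.
have himg : Phi @: Bk F q k = Bk F q k.
  apply/eqP; rewrite eqEcard card_imset // leqnn andbT.
  by apply/subsetP => B' /imsetP [B hB ->]; exact: good.
rewrite /lam -(card_imset _ Phi_inj); apply: eq_card => B'.
rewrite [in RHS]inE; apply/imsetP/andP.
  case=> B; rewrite inE => /andP [hB hPB] ->; split; first exact: good.
  exact: imsetS.
case=> hB' hsub; move: hB'; rewrite -{1}himg => /imsetP [B hB eB].
exists B => //; rewrite inE; apply/andP; split => //; apply/subsetP => x xP.
have : sg x \in Phi B by rewrite -eB (subsetP hsub) // imset_f.
by rewrite mem_imset //; exact: sg_inj.
Qed.

End Mob.


Lemma addxx (x : F) : x + x = 0.
Proof. by rewrite -{2}(oppE x) subrr. Qed.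

Lemma add_eq0 (x y : F) : x + y = 0 -> x = y.
Proof. by move/eqP; rewrite -{1}(oppE y) subr_eq0 => /eqP. Qed.

Lemma frobM (x y : F) : (x * y) ^+ q = x ^+ q * y ^+ q.
Proof. exact: exprMn. Qed.

Section Trans.
Variables om u1 u2 u3 : F.
Hypothesis hom : om ^+ q != om.
Hypotheses (h1 : u1 ^+ q.+1 = 1) (h2 : u2 ^+ q.+1 = 1) (h3 : u3 ^+ q.+1 = 1).
Hypotheses (d12 : u1 != u2) (d13 : u1 != u3) (d23 : u2 != u3).

Let al := u2 + u3.
Let be := u2 + u1.
Let om' := om ^+ q.
Definition tA := al + om' * be.
Definition tB := al * u1 + om' * be * u3.
Definition tC := al + om * be.
Definition tD := al * u1 + om * be * u3.

Lemma sum_neq0 (x y : F) : x != y -> x + y != 0.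
Proof. by move=> h; apply/eqP => /add_eq0 e; rewrite e eqxx in h. Qed.

Lemma al0 : al != 0. Proof. by apply: sum_neq0. Qed.
Lemma be0 : be != 0. Proof. by apply: sum_neq0; rewrite eq_sym. Qed.

Lemma tdet : tA * tD - tB * tC != 0.
Proof.
have -> : tA * tD - tB * tC = al * be * (u3 - u1) * (om - om').
  by rewrite /tA /tB /tC /tD; ring.
rewrite !mulf_neq0 ?al0 ?be0 //; rewrite subr_eq0 //.
  by rewrite eq_sym.
by rewrite eq_sym.
Qed.

Lemma tU x : x ^+ q.+1 = 1 ->
  tC * x + tD != 0 /\ ((tA * x + tB) / (tC * x + tD)) ^+ q.+1 = 1.
Proof.
move=> hx.
have x0 := expU_neq0 hx; have v1 := expU_neq0 h1; have v2 := expU_neq0 h2; have v3 := expU_neq0 h3.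
have eN : tA * x + tB = al * (x + u1) + om' * (be * (x + u3)) by rewrite /tA /tB; ring.
have eD : tC * x + tD = al * (x + u1) + om * (be * (x + u3)) by rewrite /tC /tD; ring.
rewrite eN eD.
set Xv := al * (x + u1); set Yv := be * (x + u3).
have eXq : Xv ^+ q = (u2^-1 + u3^-1) * (x^-1 + u1^-1).
  by rewrite /Xv /al frobM !frobD !expU_q.
have eYq : Yv ^+ q = (u2^-1 + u1^-1) * (x^-1 + u3^-1).
  by rewrite /Yv /be frobM !frobD !expU_q.
have rel : Xv * Yv ^+ q = Xv ^+ q * Yv.
  by rewrite eXq eYq /Xv /Yv /al /be; fld.
have omq : om' ^+ q = om by rewrite /om' fqq.
have den0 : Xv + om * Yv != 0.
  apply/eqP => /add_eq0 e.
  have [Y0|Y0] := eqVneq Yv 0.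
    move: e; rewrite Y0 mulr0 /Xv => /eqP; rewrite mulf_eq0 (negbTE al0) /=.
    move: Y0; rewrite /Yv => /eqP; rewrite mulf_eq0 (negbTE be0) /= => /eqP/add_eq0 -> /eqP/add_eq0.
    by move/eqP; rewrite eq_sym (negbTE d13).
  have Yq0 : Yv ^+ q != 0 by rewrite expf_neq0.
  have : om = Xv / Yv by rewrite e; fld.
  move=> eo; move: hom; rewrite eo expr_div_n.
  have -> : Xv ^+ q / Yv ^+ q = Xv / Yv.
    apply: (mulIf Yq0); apply: (mulIf Y0); rewrite divfK // -rel; fld.
  by rewrite eqxx.
clearbody Xv Yv.
split => //.
rewrite expr_div_n.
suff -> : (Xv + om' * Yv) ^+ q.+1 = (Xv + om * Yv) ^+ q.+1 by rewrite divff // expf_neq0.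
rewrite !exprS !frobD !frobM omq.
apply/eqP; rewrite -subr_eq0; apply/eqP.
transitivity ((om - om') * (Xv * Yv ^+ q - Xv ^+ q * Yv)); first by rewrite /om'; ring.
by rewrite rel subrr mulr0.
Qed.


Lemma om0 : om != 0.
Proof. by apply: contraNneq hom => ->; rewrite expr0n expn_eq0 /=. Qed.

Lemma om1 : 1 + om != 0.
Proof.
apply: sum_neq0; apply: contraNneq hom => <-; by rewrite expr1n.
Qed.

Lemma img1 : (tA * u1 + tB) / (tC * u1 + tD) = om' / om.
Proof.
have e1 : tA * u1 + tB = om' * (be * (u1 + u3)).
  transitivity (al * (u1 + u1) + om' * (be * (u1 + u3))); first by rewrite /tA /tB; ring.
  by rewrite addxx mulr0 add0r.
have e2 : tC * u1 + tD = om * (be * (u1 + u3)).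
  transitivity (al * (u1 + u1) + om * (be * (u1 + u3))); first by rewrite /tC /tD; ring.
  by rewrite addxx mulr0 add0r.
have h : be * (u1 + u3) != 0 by rewrite mulf_neq0 ?be0 ?sum_neq0.
have o0 := om0.
have b0 := be0; have s13 := sum_neq0 d13.
by rewrite e1 e2; fld.
Qed.

Lemma img2 : (tA * u2 + tB) / (tC * u2 + tD) = (1 + om') / (1 + om).
Proof.
have e1 : tA * u2 + tB = (1 + om') * (al * be) by rewrite /tA /tB /al /be; ring.
have e2 : tC * u2 + tD = (1 + om) * (al * be) by rewrite /tC /tD /al /be; ring.
have h : al * be != 0 by rewrite mulf_neq0 ?be0 ?al0.
have o1 := om1; have a0 := al0; have b0 := be0.
by rewrite e1 e2; fld.
Qed.

Lemma img3 : (tA * u3 + tB) / (tC * u3 + tD) = 1.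
Proof.
have e1 : tA * u3 + tB = al * (u3 + u1).
  transitivity (al * (u3 + u1) + om' * (be * (u3 + u3))); first by rewrite /tA /tB; ring.
  by rewrite addxx !mulr0 addr0.
have e2 : tC * u3 + tD = al * (u3 + u1).
  transitivity (al * (u3 + u1) + om * (be * (u3 + u3))); first by rewrite /tC /tD; ring.
  by rewrite addxx !mulr0 addr0.
have h : al * (u3 + u1) != 0 by rewrite mulf_neq0 ?al0 ?sum_neq0 // eq_sym.
by rewrite e1 e2 divff.
Qed.

End Trans.


Lemma exists_om : exists om : F, om ^+ q != om.
Proof.
apply/existsP; apply: contraT; rewrite negb_exists => /forallP /= hall.
pose p : {poly F} := 'X^q - 'X.
have q4 := q_ge4.
have pq : p`_q = 1.
  rewrite /p coefB coefXn coefX eqxx.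
  have -> : (q == 1)%N = false by apply/eqP; lia.
  by rewrite subr0.
have : p = 0.
  apply: (@roots_geq_poly_eq0 _ p (enum F)).
  - apply/allP => y _; rewrite /root /p !hornerE subr_eq0.
    by have := hall y; rewrite negbK.
  - exact: enum_uniq.
  - rewrite -cardE hF.
    apply: (leq_trans (size_polyD _ _)); rewrite size_polyN size_polyXn size_polyX geq_max.
    apply/andP; split; rewrite -mulnn; move: q4; generalize q => Q hQ; nia.
by move=> p0; move: pq; rewrite p0 coef0 => /eqP; rewrite eq_sym oner_eq0.
Qed.

Lemma main_S k : (1 <= k <= q.+1)%N ->
  (exists v : {ffun Uq F q -> F}, inC35dual_GFq v /\ wt v = k) ->
  (forall (a b c d : F), inStab q a b c d ->
     forall B, B \in Bk F q k -> imB a b c d B \in Bk F q k)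
  /\ ((3 < k)%N -> is_t_design 3 (Bk F q k)).
Proof.
move=> hk [v0 [hv0 hw0]].
split.
  move=> a b c d /andP [hdet /eqP hset] B hB.
  have hU : forall x, x ^+ q.+1 = 1 -> c * x + d != 0 /\ ((a * x + b) / (c * x + d)) ^+ q.+1 = 1.
    move=> x hx.
    pose u : Uq F q := exist (fun x : F => x ^+ q.+1 == 1) x (introT eqP hx).
    have : lft a b c d (Some x) \in [set Some (val u) | u : Uq F q].
      by rewrite -hset; apply/imsetP; exists u.
    case/imsetP => u' _; rewrite /lft; case: eqP => [_ //|/eqP hY [e]].
    by split => //; rewrite e; exact: valU.
  rewrite (_ : imB a b c d B = [set sg hU u | u in B]); first exact: good.
  apply/setP => u'; rewrite /imB inE; apply/imsetP/imsetP.
    case=> u uB /=; rewrite /lft (negbTE (Y_neq0 hU (valU u))) => [[e]].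
    by exists u => //; apply: val_inj; exact: e.
  case=> u uB ->; exists u => //=.
  by rewrite /lft (negbTE (Y_neq0 hU (valU u))).
move=> hk3.
have [om hom] := exists_om.
pose P0 := [set u : Uq F q | val u \in [:: om ^+ q / om; (1 + om ^+ q) / (1 + om); 1]].
have key : forall P : {set Uq F q}, #|P| = 3 -> lam k P = lam k P0.
  move=> P hP.
  have hs : size (enum P) = 3 by rewrite -cardE.
  have hu := enum_uniq P.
  have memP x : (x \in P) = (x \in enum P) by rewrite mem_enum.
  move: hs hu memP; case: (enum P) => [|u1 [|u2 [|u3 [|? ?]]]] // _.
  rewrite /= !inE !negb_or => /and3P [/andP [n12 n13] n23 _] memP.
  have d12 : val u1 != val u2 by rewrite (inj_eq val_inj).
  have d13 : val u1 != val u3 by rewrite (inj_eq val_inj).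
  have d23 : val u2 != val u3 by rewrite (inj_eq val_inj).
  have hU := tU hom (valU u1) (valU u2) (valU u3) d12 d13 d23.
  have hdet := tdet hom d12 d13 d23.
  rewrite (lam_inv hdet hU); congr lam.
  apply/setP => w; rewrite inE; apply/imsetP/idP.
    case=> u; rewrite memP !inE => /or3P [] /eqP -> -> /=.
    - by rewrite (img1 hom d12 d13) eqxx.
    - by rewrite (img2 hom d12 d23) eqxx orbT.
    - by rewrite (img3 _ d13 d23) eqxx !orbT.
  rewrite !inE => /or3P [] /eqP hw.
  - by exists u1; [rewrite memP !inE eqxx | apply: val_inj; rewrite hw /= (img1 hom d12 d13)].
  - by exists u2; [rewrite memP !inE eqxx orbT | apply: val_inj; rewrite hw /= (img2 hom d12 d23)].
  - by exists u3; [rewrite memP !inE eqxx !orbT | apply: val_inj; rewrite hw /= (img3 _ d13 d23)].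
exists (lam k P0); last exact: key.
pose S := supp v0.
have hS : #|S| = k by [].
pose P := [set x in take 3 (enum S)].
have hP : #|P| = 3.
  have /card_uniqP hu : uniq (take 3 (enum S)) by exact/take_uniq/enum_uniq.
  rewrite cardsE hu.
  by rewrite size_take -cardE hS hk3.
rewrite -(key P hP) /lam; apply/card_gt0P; exists S.
rewrite !inE; apply/andP; split.
  by apply/existsP; exists v0; rewrite hv0 hw0 !eqxx.
by apply/subsetP => x; rewrite inE => /mem_take; rewrite mem_enum.
Qed.

End S.

Theorem theorem24 (m : nat) (F : finFieldType) (k : nat) :
  (2 <= m)%N ->
  #|F| = ((2 ^ m) ^ 2)%N ->
  (1 <= k <= (2 ^ m).+1)%N ->
  (exists v : {ffun Uq F (2 ^ m) -> F}, inC35dual_GFq v /\ wt v = k) ->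
  (forall (a b c d : F), inStab (2 ^ m) a b c d ->
     forall B, B \in Bk F (2 ^ m) k -> imB a b c d B \in Bk F (2 ^ m) k)
  /\ ((3 < k)%N -> is_t_design 3 (Bk F (2 ^ m) k)).
Proof. by move=> hm hF; apply: main_S. Qed.
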